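(* Let $s\ge 2$ and $n\ge 2$ be integers, and let \[f(x)=(x^{s}-1)^{n}-x^{n-1}(x^{s-1}-1)^{n},\qquad g(x)=x^{ns}-x^{ns-1}+x^{n-1}-1.\] If $\alpha\in\mathbb{C}$ is a root of $g(x)$, then $\alpha^{n}$ is a root of $f(x)$.
   Context: Here (after the substitution $x=1-q$) $f$ is, up to the factor $(x-1)^n$, the interesting factor of the chromatic polynomial of the theta-graph with $n$ paths of length $s$, and $g$ is the interesting factor of the chromatic polynomial of the generalised theta graph with paths of lengths $ns-n+1,\ldots,ns$. *)

(* Defs.v *)
From mathcomp Require Import all_boot all_order all_algebra all_field.
Set Implicit Arguments. Unset Strict Implicit. Unset Printing Implicit Defensive.
Import GRing.Theory.
Local Open Scope ring_scope.

Definition fpoly (s n : nat) : {poly algC} :=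
  ('X^s - 1) ^+ n - 'X^(n.-1) * ('X^(s.-1) - 1) ^+ n.

Definition gpoly (s n : nat) : {poly algC} :=
  'X^(n * s) - 'X^((n * s).-1) + 'X^(n.-1) - 1.

(* Main.v *)
Require Import Defs.
From mathcomp Require Import all_boot all_order all_algebra all_field.
From mathcomp Require Import zify ring.
Local Open Scope ring_scope.
Import GRing.Theory.

Theorem theorem6 (s n : nat) (hs : (2 <= s)%N) (hn : (2 <= n)%N) (alpha : algC) :
  root (gpoly s n) alpha -> root (fpoly s n) (alpha ^+ n).
Proof.
rewrite /root /gpoly /fpoly !hornerE => /eqP H.
set B := alpha ^+ (n * s.-1) - 1.
have e1 : ((n * s).-1 = n.-1 + n * s.-1)%N.
  case: n hn {H B} => [|[|n']] //; case: s hs => [|[|s']] // _ _; lia.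
have e2 : (n * s = n + n * s.-1)%N.
  by case: s hs {H B e1} => [|s'] // _; rewrite mulnS.
have HB : alpha ^+ (n * s) - 1 = alpha ^+ n.-1 * B.
  apply/eqP; rewrite -subr_eq0 -H /B; apply/eqP.
  rewrite e1 e2 !exprD.
  have -> : alpha ^+ n = alpha ^+ n.-1 * alpha.
    by case: n hn {H B e1 e2} => // n' _; rewrite exprS mulrC.
  ring.
rewrite -!exprM HB exprMn -exprM mulnC exprM subrr.
done.
Qed.
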